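(* Let $n\ge1$ and let $f$ be an automorphism of the additive group $\mathbb{Z}^n$. If $f$ has cycles of lengths $\alpha$ and $\beta$, each different from the zero cycle $\{0\}$, then $f$ has a cycle of length $\mathrm{lcm}(\alpha,\beta)$.
   Context: For a bijection $f$ of a set, a cycle is a finite sequence $a_1,\dots,a_m$ of distinct elements with $f(a_j)=a_{j+1}$ for $j<m$ and $f(a_m)=a_1$; its length is $m$. The zero cycle of an automorphism of $\mathbb{Z}^n$ is the fixed point $0$. *)

(* Defs.v *)
(* Z^n is modelled as 'rV[int]_n. *)
From mathcomp Require Import all_boot all_order all_algebra.
Set Implicit Arguments. Unset Strict Implicit. Unset Printing Implicit Defensive.
Import GRing.Theory.
Local Open Scope ring_scope.

Definition is_Zn_aut (n : nat) (f : 'rV[int]_n -> 'rV[int]_n) : Prop :=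
  (forall x y, f (x + y) = f x + f y) /\ bijective f.

(* s = [:: a_1; ...; a_m] is a cycle of f: nonempty, distinct elements,
   f a_j = a_{j+1} for j < m and f a_m = a_1 (MathComp's fcycle). *)
Definition is_cycle (T : eqType) (f : T -> T) (s : seq T) : bool :=
  [&& (0 < size s)%N, uniq s & fcycle f s].

(* Main.v *)
Require Import Defs.
From mathcomp Require Import all_boot all_order all_algebra.
From mathcomp Require Import zify.
Import GRing.Theory Num.Theory.
Section Aux.
Variables (T : eqType) (f : T -> T).
Hypothesis finj : injective f.

Lemma iter_inj m : injective (iter m f).
Proof. elim: m => [|m IH] x y //=; by move/finj/IH. Qed.

Definition exper (x : T) (a : nat) :=
  [/\ (0 < a)%N, iter a f x = x & forall m, (0 < m < a)%N -> iter m f x != x].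

Lemma exper_dvd x a m : exper x a -> (iter m f x == x) = (a %| m)%N.
Proof.
case=> a0 ha hm.
have hq : forall q, iter (q * a) f x = x.
  by elim=> [|q IH] //; rewrite mulSn iterD IH ha.
rewrite {1}(divn_eq m a) addnC iterD hq /dvdn.
case: (posnP (m %% a)) => [->|r0] /=; first by rewrite eqxx.
have := hm (m %% a)%N; rewrite r0 ltn_pmod //= => /(_ isT) /negbTE ->.
by [].
Qed.

Lemma cycle_exper s : is_cycle f s -> exists x, exper x (size s).
Proof.
case/and3P; case: s => [|x p] //= _ hu hc.
exists x; move: hc; rewrite rcons_path => /andP [hp /eqP hl].
have [k hk] := fpathP hp; subst p.
rewrite size_traject; split => //.
  by rewrite iterS -last_traject.
move=> m /andP [m0 mk].
have hu' : uniq (traject f x k.+1) by [].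
have s1 : (m < size (traject f x k.+1))%N by rewrite size_traject.
have s2 : (0 < size (traject f x k.+1))%N by rewrite size_traject.
have := nth_uniq x s1 s2 hu'.
rewrite !nth_traject // => ->; by rewrite -lt0n.
Qed.

Lemma exper_cycle z L : exper z L -> is_cycle f (traject f z L).
Proof.
case=> L0 hL hm; apply/and3P; split; first by rewrite size_traject.
  apply/(uniqP z) => i j; rewrite !inE size_traject => hi hj.
  rewrite !nth_traject //.
  wlog ij : i j hi hj / (i <= j)%N.
    move=> H e; case: (leqP i j) => h; first exact: H.
    exact/esym/(H j i hj hi (ltnW h) (esym e)).
  move=> e; apply/eqP; rewrite eqn_leq ij /=; apply/negP => ji.
  have e2 : iter i f (iter (j - i) f z) = iter i f z by rewrite -iterD subnKC.
  have := hm (j - i)%N; rewrite (@iter_inj i _ _ e2) eqxx.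
  have hji : (0 < j - i < L)%N by apply/andP; split; lia.
  by move/(_ hji).
case: L L0 hL {hm} => [|L] // _ hL.
rewrite trajectS /= rcons_path fpath_traject /= last_traject -iterS hL.
by rewrite eqxx.
Qed.
End Aux.

Lemma mxnE m n (A : 'M[int]_(m, n)) k i j : (A *+ k)%R i j = (A i j *+ k)%R.
Proof. by elim: k => [|k IH]; rewrite ?mulr0n ?mulrS ?mxE ?IH. Qed.
Arguments exper {T}.
Arguments cycle_exper {T f s}.
Arguments exper_dvd {T f x a} m.
Arguments exper_cycle {T f} _ {z L}.
Local Open Scope ring_scope.

Theorem theorem3p8 (n : nat) (f : 'rV[int]_n -> 'rV[int]_n) (alpha beta : nat) :
  (1 <= n)%N ->
  is_Zn_aut f ->
  (exists s : seq 'rV[int]_n, [/\ is_cycle f s, size s = alpha & s != [:: 0]]) ->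
  (exists t : seq 'rV[int]_n, [/\ is_cycle f t, size t = beta & t != [:: 0]]) ->
  exists u : seq 'rV[int]_n, is_cycle f u /\ size u = lcmn alpha beta.
Proof.
move=> _ [fadd fbij] [s [hs sa _]] [t [ht tb _]].
have finj := bij_inj fbij.
have [x hx] := cycle_exper hs; have [y hy] := cycle_exper ht.
rewrite sa in hx; rewrite tb in hy.
have f0 : f 0 = 0 by apply/(addrI (f 0)); rewrite -fadd !addr0.
have itadd : forall m u v, iter m f (u + v) = iter m f u + iter m f v.
  by elim=> [|m IH] u v //=; rewrite IH fadd.
have itmul : forall m u k, iter m f (u *+ k) = iter m f u *+ k.
  move=> m u; elim=> [|k IH]; first by rewrite !mulr0n; elim: m => //= m ->.
  by rewrite !mulrS itadd IH.
set L := lcmn alpha beta.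
set B := (\sum_(m < L) \sum_(i < n) absz ((iter m f x - x)%R ord0 i))%N.
have hB : forall m i, (m < L)%N -> (absz ((iter m f x - x)%R ord0 i) <= B)%N.
  move=> m i hm; rewrite /B (bigD1 (Ordinal hm)) //= (bigD1 i) //=.
  by rewrite -addnA leq_addr.
set k := B.+1.
exists (traject f (x + y *+ k) L); rewrite size_traject; split => //.
case: hx => [a0 ha hma]; case: hy => [b0 hb hmb].
have hx : exper f x alpha by [].
have hy : exper f y beta by [].
apply: exper_cycle => //; split.
- by rewrite lcmn_gt0 a0 b0.
- have eL1 : iter L f x = x by apply/eqP; rewrite (exper_dvd _ hx) dvdn_lcml.
  have eL2 : iter L f y = y by apply/eqP; rewrite (exper_dvd _ hy) dvdn_lcmr.
  by rewrite itadd itmul eL1 eL2.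
- move=> m /andP [m0 mL]; apply/eqP => e.
  move: e; rewrite itadd itmul => e.
  case: (boolP (iter m f y == y)) => ey.
    move: e; rewrite (eqP ey) => /addIr /eqP ex.
    rewrite (exper_dvd _ hx) in ex; rewrite (exper_dvd _ hy) in ey.
    have : (L %| m)%N by rewrite dvdn_lcm ex ey.
    by move/dvdn_leq => /(_ m0); rewrite leqNgt mL.
  have [i hi] : exists i, (iter m f y) ord0 i != y ord0 i.
    apply/existsP; apply: contraR ey => /existsPn h; apply/eqP/matrixP => a j.
    by rewrite (ord1 a); apply/eqP; have := h j; rewrite negbK.
  have := hB m i mL; have := congr1 (fun M : 'rV[int]_n => M ord0 i) e => /=.
  rewrite !mxE !mxnE.
  move: hi; set c1 := iter m f x ord0 i; set c0 := x ord0 i.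
  set d1 := iter m f y ord0 i; set d0 := y ord0 i => hi.
  rewrite /k; clear hB; clearbody B.
  move=> e1 e2; move/eqP: hi => hi.
  have h1 : d1 *+ B.+1 = d1 * (B.+1)%:Z by rewrite -natz mulr_natr.
  have h0 : d0 *+ B.+1 = d0 * (B.+1)%:Z by rewrite -natz mulr_natr.
  rewrite h1 h0 in e1.
  have : (d1 - d0 >= 1) \/ (d0 - d1 >= 1) by lia.
  case=> hd; nia.
Qed.
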